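(* For a map $F= \left( \begin{bmatrix} f \\ g \end{bmatrix}, \begin{bmatrix} \alpha & \beta \\ \beta^\dagger & \delta \end{bmatrix}, \begin{bmatrix} s \\ t \end{bmatrix} \right): A \to B \otimes C$ in $\mathfrak{G}\left[ (\mathbb{X}, \dagger) \right]_X$, conditionals of $F$ are in bijective correspondence with conditional generators of $\begin{bmatrix} \alpha & \beta \\ \beta^\dagger & \delta \end{bmatrix}$. Explicitly: (i) If $G = \left( \begin{bmatrix} m & k \end{bmatrix}, \eta, u \right)$ is a conditional of $F$ then $m$ is a conditional generator of $\begin{bmatrix} \alpha & \beta \\ \beta^\dagger & \delta \end{bmatrix}$; (ii) If $m$ is a conditional generator of $\begin{bmatrix} \alpha & \beta \\ \beta^\dagger & \delta \end{bmatrix}$, then $G_m = \left( \begin{bmatrix} m & g - m \circ f \end{bmatrix}, \delta - m \circ \beta, t - m\circ s \right)$ is a conditional of $F$; and these constructions are inverses of each other.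
   Context: Let $(\mathbb{X}, \dagger)$ be a dagger additive category (a dagger category enriched in abelian groups with additive dagger and finite biproducts satisfying $\pi_j^\dagger = \iota_j$; maps between biproducts are written as matrices and the dagger acts as conjugate transpose) and fix an object $X$. A map $p$ is $\dagger$-positive if $p = \phi^\dagger \circ \phi$ for some $\phi$. The Gauss construction $\mathfrak{G}\left[ (\mathbb{X}, \dagger) \right]_X$ is the Markov category with the objects of $\mathbb{X}$, maps $A \to B$ the triples $(f,p,x)$ with $f: A \to B$, $p: B \to B$ $\dagger$-positive, $x: X \to B$; identities $\mathsf{Id}_A = (\mathsf{id}_A,0,0)$; composition $(g,q,y) \circ (f,p,x) = (g \circ f, q + g \circ p \circ g^\dagger, y + g \circ x)$; $A \otimes B = A \oplus B$, $(f,p,x) \otimes (g,q,y) = \left(f \oplus g, p \oplus q, \begin{bmatrix} x \\ y \end{bmatrix}\right)$; copy $\mathsf{copy}_A = \left(\begin{bmatrix} \mathsf{id}_A \\ \mathsf{id}_A \end{bmatrix}, 0, 0\right)$, delete $\mathsf{del}_A = (0,0,0): A \to \mathsf{0}$. In $F$, $f: A \to B$, $g: A \to C$, $\alpha: B \to B$, $\beta: C \to B$, $\delta: C \to C$, $s: X \to B$, $t: X \to C$; in $G: B \otimes A \to C$, $m: B \to C$, $k: A \to C$, $\eta: C \to C$, $u: X \to C$. A conditional generator for a $\dagger$-positive map $\begin{bmatrix} \alpha & \beta \\ \beta^\dagger & \delta \end{bmatrix}: B \oplus C \to B \oplus C$ is a map $m: B \to C$ such that (i) $m \circ \alpha = \beta^\dagger$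 and (ii) $\delta - m \circ \beta$ is $\dagger$-positive. A map $G: B \otimes A \to C$ is a conditional of $F: A \to B \otimes C$ if $(\mathsf{Id}_B \otimes G) \circ (\mathsf{copy}_B \otimes \mathsf{Id}_A) \circ (\mathsf{Id}_B \otimes \mathsf{del}_C \otimes \mathsf{Id}_A) \circ (F \otimes \mathsf{Id}_A) \circ \mathsf{copy}_A = F$. *)

(* Defs.v *)
From HB Require Import structures.
From mathcomp Require Import all_boot all_algebra.
Import GRing.Theory.
Local Open Scope ring_scope.

Record dagAddCat := DagAddCat {
  Ob : Type;
  Hom : Ob -> Ob -> zmodType;
  comp : forall A B C : Ob, Hom B C -> Hom A B -> Hom A C;
  idm : forall A : Ob, Hom A A;
  dag : forall A B : Ob, Hom A B -> Hom B A;
  zob : Ob;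
  bp : Ob -> Ob -> Ob;
  pi1 : forall A B : Ob, Hom (bp A B) A;
  pi2 : forall A B : Ob, Hom (bp A B) B;
  in1 : forall A B : Ob, Hom A (bp A B);
  in2 : forall A B : Ob, Hom B (bp A B);
  compA : forall (A B C D : Ob) (h : Hom C D) (g : Hom B C) (f : Hom A B),
    comp A C D h (comp A B C g f) = comp A B D (comp B C D h g) f;
  comp1m : forall (A B : Ob) (f : Hom A B), comp A B B (idm B) f = f;
  compm1 : forall (A B : Ob) (f : Hom A B), comp A A B f (idm A) = f;
  compDl : forall (A B C : Ob) (g1 g2 : Hom B C) (f : Hom A B),
    comp A B C (g1 + g2) f = comp A B C g1 f + comp A B C g2 f;
  compDr : forall (A B C : Ob) (g : Hom B C) (f1 f2 : Hom A B),
    comp A B C g (f1 + f2) = comp A B C g f1 + comp A B C g f2;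
  dagK : forall (A B : Ob) (f : Hom A B), dag B A (dag A B f) = f;
  dag_comp : forall (A B C : Ob) (g : Hom B C) (f : Hom A B),
    dag A C (comp A B C g f) = comp C B A (dag A B f) (dag B C g);
  dag_id : forall A : Ob, dag A A (idm A) = idm A;
  dagD : forall (A B : Ob) (f g : Hom A B), dag A B (f + g) = dag A B f + dag A B g;
  zob_id : idm zob = 0;
  bp_11 : forall A B : Ob, comp A (bp A B) A (pi1 A B) (in1 A B) = idm A;
  bp_22 : forall A B : Ob, comp B (bp A B) B (pi2 A B) (in2 A B) = idm B;
  bp_12 : forall A B : Ob, comp B (bp A B) A (pi1 A B) (in2 A B) = 0;
  bp_21 : forall A B : Ob, comp A (bp A B) B (pi2 A B) (in1 A B) = 0;
  bp_sum : forall A B : Ob,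
    comp (bp A B) A (bp A B) (in1 A B) (pi1 A B)
    + comp (bp A B) B (bp A B) (in2 A B) (pi2 A B) = idm (bp A B);
  dag_pi1 : forall A B : Ob, dag (bp A B) A (pi1 A B) = in1 A B;
  dag_pi2 : forall A B : Ob, dag (bp A B) B (pi2 A B) = in2 A B
}.

Set Implicit Arguments. Unset Strict Implicit. Unset Printing Implicit Defensive.

Arguments Hom {d} A B.
Arguments comp {d A B C} g f.
Arguments idm {d} A.
Arguments dag {d A B} f.
Arguments zob {d}.
Arguments bp {d} A B.
Arguments pi1 {d} A B.
Arguments pi2 {d} A B.
Arguments in1 {d} A B.
Arguments in2 {d} A B.

Notation "g \oc f" := (comp g f) (at level 40, left associativity).

Definition dpositive (d : dagAddCat) (B : Ob d) (p : Hom B B) : Prop :=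
  exists (Y : Ob d) (phi : Hom B Y), p = dag phi \oc phi.

Definition col2 (d : dagAddCat) (Z B C : Ob d) (x : Hom Z B) (y : Hom Z C)
  : Hom Z (bp B C) := in1 B C \oc x + in2 B C \oc y.
Definition row2 (d : dagAddCat) (B A C : Ob d) (m : Hom B C) (k : Hom A C)
  : Hom (bp B A) C := m \oc pi1 B A + k \oc pi2 B A.
(* [[a, b], [c, d']] : B (+) C -> B' (+) C' *)
Definition mat2 (d : dagAddCat) (B C B' C' : Ob d)
  (a : Hom B B') (b : Hom C B') (c : Hom B C') (e : Hom C C')
  : Hom (bp B C) (bp B' C') :=
  in1 B' C' \oc a \oc pi1 B C + in1 B' C' \oc b \oc pi2 B C
  + in2 B' C' \oc c \oc pi1 B C + in2 B' C' \oc e \oc pi2 B C.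
Definition dsum (d : dagAddCat) (A B A' B' : Ob d) (f : Hom A A') (g : Hom B B')
  : Hom (bp A B) (bp A' B') := mat2 f 0 0 g.

(* The Gauss construction G[(X, dagger)]_X : a map A -> B is a triple
   (f, p, x) with p dagger-positive.  We represent triples by [gmap] and
   impose positivity as a separate predicate [is_gmap]. *)
Record gmap (d : dagAddCat) (X A B : Ob d) := GMap {
  gf : Hom A B; gp : Hom B B; gx : Hom X B }.
Arguments GMap {d X A B} _ _ _.
Arguments gf {d X A B} _.
Arguments gp {d X A B} _.
Arguments gx {d X A B} _.

Definition is_gmap (d : dagAddCat) (X A B : Ob d) (F : gmap X A B) : Prop :=
  dpositive (gp F).

Section Gauss.
Variables (d : dagAddCat) (X : Ob d).

Definition gid (A : Ob d) : gmap X A A := GMap (idm A) 0 0.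
Definition gcomp (A B C : Ob d) (G : gmap X B C) (F : gmap X A B) : gmap X A C :=
  GMap (gf G \oc gf F) (gp G + gf G \oc gp F \oc dag (gf G)) (gx G + gf G \oc gx F).
Definition gtensor (A B A' B' : Ob d) (F : gmap X A A') (G : gmap X B B')
  : gmap X (bp A B) (bp A' B') :=
  GMap (dsum (gf F) (gf G)) (dsum (gp F) (gp G)) (col2 (gx F) (gx G)).
Definition gcopy (A : Ob d) : gmap X A (bp A A) := GMap (col2 (idm A) (idm A)) 0 0.
Definition gdel (A : Ob d) : gmap X A zob := GMap 0 0 0.
Definition gassoc (A B C : Ob d) : gmap X (bp (bp A B) C) (bp A (bp B C)) :=
  GMap (col2 (pi1 A B \oc pi1 (bp A B) C)
             (col2 (pi2 A B \oc pi1 (bp A B) C) (pi2 (bp A B) C))) 0 0.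
Definition grunit (A : Ob d) : gmap X (bp A zob) A := GMap (pi1 A zob) 0 0.

(* G : B (x) A -> C is a conditional of F : A -> B (x) C when
   (Id_B (x) G) o (copy_B (x) Id_A) o (Id_B (x) del_C (x) Id_A) o (F (x) Id_A) o copy_A = F,
   with associator/unitor made explicit. *)
Definition conditional (A B C : Ob d) (G : gmap X (bp B A) C) (F : gmap X A (bp B C))
  : Prop :=
  gcomp (gtensor (gid B) G)
   (gcomp (gassoc B B A)
    (gcomp (gtensor (gcopy B) (gid A))
     (gcomp (gtensor (grunit B) (gid A))
      (gcomp (gtensor (gtensor (gid B) (gdel C)) (gid A))
       (gcomp (gtensor F (gid A)) (gcopy A)))))) = F.

End Gauss.
Arguments gid {d X} A.
Arguments gcopy {d X} A.
Arguments gdel {d X} A.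
Arguments gassoc {d X} A B C.
Arguments grunit {d X} A.

Definition cond_gen (d : dagAddCat) (B C : Ob d)
  (alpha : Hom B B) (beta : Hom C B) (delta : Hom C C) (m : Hom B C) : Prop :=
  m \oc alpha = dag beta /\ dpositive (delta - m \oc beta).

(* Main.v *)
Require Import Defs.
From mathcomp Require Import all_boot ssralg.
Local Open Scope ring_scope.
Import GRing.Theory.
Set Implicit Arguments. Unset Strict Implicit.
Section L.
Variable d : dagAddCat.
Implicit Types A B C D Z : Ob d.

Lemma cA A B C D (h : Hom C D) (g : Hom B C) (f : Hom A B) : h \oc (g \oc f) = h \oc g \oc f.
Proof. exact: (Defs.compA d). Qed.
Lemma c1m A B (f : Hom A B) : idm B \oc f = f. Proof. exact: (Defs.comp1m d). Qed.
Lemma cm1 A B (f : Hom A B) : f \oc idm A = f. Proof. exact: (Defs.compm1 d). Qed.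
Lemma cDl A B C (g1 g2 : Hom B C) (f : Hom A B) : (g1 + g2) \oc f = g1 \oc f + g2 \oc f.
Proof. exact: (Defs.compDl d). Qed.
Lemma cDr A B C (g : Hom B C) (f1 f2 : Hom A B) : g \oc (f1 + f2) = g \oc f1 + g \oc f2.
Proof. exact: (Defs.compDr d). Qed.
Lemma c0m A B C (f : Hom A B) : (0 : Hom B C) \oc f = 0.
Proof. by apply: (@addrI _ ((0 : Hom B C) \oc f)); rewrite -cDl !addr0. Qed.
Lemma cm0 A B C (f : Hom B C) : f \oc (0 : Hom A B) = 0.
Proof. by apply: (@addrI _ (f \oc (0 : Hom A B))); rewrite -cDr !addr0. Qed.
Lemma cNl A B C (g : Hom B C) (f : Hom A B) : (- g) \oc f = - (g \oc f).
Proof. by apply: (@addrI _ (g \oc f)); rewrite -cDl !subrr c0m. Qed.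
Lemma cNr A B C (g : Hom B C) (f : Hom A B) : g \oc (- f) = - (g \oc f).
Proof. by apply: (@addrI _ (g \oc f)); rewrite -cDr !subrr cm0. Qed.
Lemma dK A B (f : Hom A B) : dag (dag f) = f. Proof. exact: (Defs.dagK d). Qed.
Lemma dC A B C (g : Hom B C) (f : Hom A B) : dag (g \oc f) = dag f \oc dag g.
Proof. exact: (Defs.dag_comp d). Qed.
Lemma dDD A B (f g : Hom A B) : dag (f + g) = dag f + dag g. Proof. exact: (Defs.dagD d). Qed.
Lemma d0 A B : dag (0 : Hom A B) = 0.
Proof. by apply: (@addrI _ (dag (0 : Hom A B))); rewrite -dDD !addr0. Qed.
Lemma dN A B (f : Hom A B) : dag (- f) = - dag f.
Proof. by apply: (@addrI _ (dag f)); rewrite -dDD !subrr d0. Qed.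
Lemma d1 A : dag (idm A) = idm A. Proof. exact: (Defs.dag_id d). Qed.

Lemma pi1c Z B C (x : Hom Z B) (y : Hom Z C) : pi1 B C \oc col2 x y = x.
Proof. by rewrite /col2 cDr !cA (bp_11 d) (bp_12 d) c1m c0m addr0. Qed.
Lemma pi2c Z B C (x : Hom Z B) (y : Hom Z C) : pi2 B C \oc col2 x y = y.
Proof. by rewrite /col2 cDr !cA (bp_22 d) (bp_21 d) c1m c0m add0r. Qed.
Lemma r_in1 B A C (m : Hom B C) (k : Hom A C) : row2 m k \oc in1 B A = m.
Proof. by rewrite /row2 cDl -!cA (bp_11 d) (bp_21 d) cm1 cm0 addr0. Qed.
Lemma r_in2 B A C (m : Hom B C) (k : Hom A C) : row2 m k \oc in2 B A = k.
Proof. by rewrite /row2 cDl -!cA (bp_22 d) (bp_12 d) cm1 cm0 add0r. Qed.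
Lemma col2E Z B C (h : Hom Z (bp B C)) : h = col2 (pi1 B C \oc h) (pi2 B C \oc h).
Proof. by rewrite /col2 !cA -cDl (bp_sum d) c1m. Qed.
Lemma row2E B A C (h : Hom (bp B A) C) : h = row2 (h \oc in1 B A) (h \oc in2 B A).
Proof. by rewrite /row2 -!cA -cDr (bp_sum d) cm1. Qed.
Lemma col2_inj Z B C (x x' : Hom Z B) (y y' : Hom Z C) :
  col2 x y = col2 x' y' -> x = x' /\ y = y'.
Proof. by move=> E; split; [have := congr1 (fun h => pi1 B C \oc h) E | have := congr1 (fun h => pi2 B C \oc h) E]; rewrite /= ?pi1c ?pi2c. Qed.
Lemma row2_inj B A C (x x' : Hom B C) (y y' : Hom A C) :
  row2 x y = row2 x' y' -> x = x' /\ y = y'.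
Proof. by move=> E; split; [have := congr1 (fun h => h \oc in1 B A) E | have := congr1 (fun h => h \oc in2 B A) E]; rewrite /= ?r_in1 ?r_in2. Qed.
Lemma rc B A C Z (m : Hom B C) (k : Hom A C) (x : Hom Z B) (y : Hom Z A) :
  row2 m k \oc col2 x y = m \oc x + k \oc y.
Proof. by rewrite {1}/col2 cDr !cA r_in1 r_in2. Qed.
Lemma cc Z Y B C (x : Hom Z B) (y : Hom Z C) (h : Hom Y Z) :
  col2 x y \oc h = col2 (x \oc h) (y \oc h).
Proof. by rewrite /col2 cDl -!cA. Qed.
Lemma cr B A C D (m : Hom B C) (k : Hom A C) (h : Hom C D) :
  h \oc row2 m k = row2 (h \oc m) (h \oc k).
Proof. by rewrite /row2 cDr !cA. Qed.
Lemma dag_in1 A B : dag (in1 A B) = pi1 A B.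
Proof. by rewrite -(dag_pi1 d A B) dK. Qed.
Lemma dag_in2 A B : dag (in2 A B) = pi2 A B.
Proof. by rewrite -(dag_pi2 d A B) dK. Qed.
Lemma dcol Z B C (x : Hom Z B) (y : Hom Z C) : dag (col2 x y) = row2 (dag x) (dag y).
Proof. by rewrite /col2 /row2 dDD !dC dag_in1 dag_in2. Qed.
Lemma drow B A C (m : Hom B C) (k : Hom A C) : dag (row2 m k) = col2 (dag m) (dag k).
Proof. by rewrite /col2 /row2 dDD !dC (dag_pi1 d) (dag_pi2 d). Qed.
Lemma col2D Z B C (x x' : Hom Z B) (y y' : Hom Z C) :
  col2 x y + col2 x' y' = col2 (x + x') (y + y').
Proof. by rewrite /col2 !cDr addrACA. Qed.
Lemma row2D B A C (x x' : Hom B C) (y y' : Hom A C) :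
  row2 x y + row2 x' y' = row2 (x + x') (y + y').
Proof. by rewrite /row2 !cDl addrACA. Qed.
Lemma col2N Z B C (x : Hom Z B) (y : Hom Z C) : - col2 x y = col2 (- x) (- y).
Proof. by rewrite /col2 !cNr opprD. Qed.
Lemma row2N B A C (x : Hom B C) (y : Hom A C) : - row2 x y = row2 (- x) (- y).
Proof. by rewrite /row2 !cNl opprD. Qed.
Lemma pi1E A B : pi1 A B = row2 (idm A) 0.
Proof. by rewrite /row2 c1m c0m addr0. Qed.
Lemma pi2E A B : pi2 A B = row2 0 (idm B).
Proof. by rewrite /row2 c1m c0m add0r. Qed.
Lemma in1E A B : in1 A B = col2 (idm A) 0.
Proof. by rewrite /col2 cm1 cm0 addr0. Qed.
Lemma in2E A B : in2 A B = col2 0 (idm B).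
Proof. by rewrite /col2 cm1 cm0 add0r. Qed.
Lemma idbE A B : idm (bp A B) = col2 (row2 (idm A) 0) (row2 0 (idm B)).
Proof. by rewrite -pi1E -pi2E /col2 (bp_sum d). Qed.
Lemma mat2E B C B' C' (a : Hom B B') (b : Hom C B') (c : Hom B C') (e : Hom C C') :
  mat2 a b c e = col2 (row2 a b) (row2 c e).
Proof. by rewrite /mat2 /col2 /row2 !cDr !cA addrA. Qed.

Fact C2_key : unit. Proof. by []. Qed.
Definition C2 Z B C (x : Hom Z B) (y : Hom Z C) := locked_with C2_key (col2 x y).
Fact R2_key : unit. Proof. by []. Qed.
Definition R2 B A C (m : Hom B C) (k : Hom A C) := locked_with R2_key (row2 m k).
Lemma C2E Z B C (x : Hom Z B) (y : Hom Z C) : col2 x y = C2 x y.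
Proof. by rewrite /C2 unlock. Qed.
Lemma R2E B A C (m : Hom B C) (k : Hom A C) : row2 m k = R2 m k.
Proof. by rewrite /R2 unlock. Qed.
Lemma C2U Z B C (x : Hom Z B) (y : Hom Z C) : C2 x y = col2 x y.
Proof. by rewrite /C2 unlock. Qed.
Lemma R2U B A C (m : Hom B C) (k : Hom A C) : R2 m k = row2 m k.
Proof. by rewrite /R2 unlock. Qed.

Lemma C2_inj Z B C (x x' : Hom Z B) (y y' : Hom Z C) :
  C2 x y = C2 x' y' -> x = x' /\ y = y'.
Proof. by rewrite !C2U; apply: col2_inj. Qed.
Lemma R2_inj B A C (x x' : Hom B C) (y y' : Hom A C) :
  R2 x y = R2 x' y' -> x = x' /\ y = y'.
Proof. by rewrite !R2U; apply: row2_inj. Qed.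
Lemma Rc B A C Z (m : Hom B C) (k : Hom A C) (x : Hom Z B) (y : Hom Z A) :
  R2 m k \oc C2 x y = m \oc x + k \oc y.
Proof. by rewrite R2U C2U rc. Qed.
Lemma Cc Z Y B C (x : Hom Z B) (y : Hom Z C) (h : Hom Y Z) :
  C2 x y \oc h = C2 (x \oc h) (y \oc h).
Proof. by rewrite !C2U cc. Qed.
Lemma Cr B A C D (m : Hom B C) (k : Hom A C) (h : Hom C D) :
  h \oc R2 m k = R2 (h \oc m) (h \oc k).
Proof. by rewrite !R2U cr. Qed.
Lemma dC2 Z B C (x : Hom Z B) (y : Hom Z C) : dag (C2 x y) = R2 (dag x) (dag y).
Proof. by rewrite C2U R2U dcol. Qed.
Lemma dR2 B A C (m : Hom B C) (k : Hom A C) : dag (R2 m k) = C2 (dag m) (dag k).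
Proof. by rewrite C2U R2U drow. Qed.
Lemma C2D Z B C (x x' : Hom Z B) (y y' : Hom Z C) :
  C2 x y + C2 x' y' = C2 (x + x') (y + y').
Proof. by rewrite !C2U col2D. Qed.
Lemma R2D B A C (x x' : Hom B C) (y y' : Hom A C) :
  R2 x y + R2 x' y' = R2 (x + x') (y + y').
Proof. by rewrite !R2U row2D. Qed.
Lemma C2N Z B C (x : Hom Z B) (y : Hom Z C) : - C2 x y = C2 (- x) (- y).
Proof. by rewrite !C2U col2N. Qed.
Lemma R2N B A C (x : Hom B C) (y : Hom A C) : - R2 x y = R2 (- x) (- y).
Proof. by rewrite !R2U row2N. Qed.
Lemma C20 Z B C : C2 (0 : Hom Z B) (0 : Hom Z C) = 0.
Proof. by rewrite C2U /col2 !cm0 addr0. Qed.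
Lemma R20 B A C : R2 (0 : Hom B C) (0 : Hom A C) = 0.
Proof. by rewrite R2U /row2 !c0m addr0. Qed.
Lemma R2C B A Z C (x : Hom B Z) (y : Hom B C) (x' : Hom A Z) (y' : Hom A C) :
  R2 (C2 x y) (C2 x' y') = C2 (R2 x x') (R2 y y').
Proof. by rewrite !R2U !C2U /row2 /col2 !cDl -!cA !cDr addrACA. Qed.
End L.

Ltac prep := rewrite ?mat2E ?pi1E ?pi2E ?in1E ?in2E ?idbE ?C2E ?R2E.
Ltac step := rewrite ?Cc ?Cr ?Rc ?dC2 ?dR2 ?C2D ?R2D ?C2N ?R2N ?C20 ?R20 ?cDl ?cDr ?c0m ?cm0 ?c1m ?cm1 ?cNl ?cNr ?dC ?dDD ?d0 ?dN ?dK ?d1 ?addr0 ?add0r ?oppr0 ?cA.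
Ltac solve := rewrite /gcomp /gtensor /gid /gcopy /gdel /gassoc /grunit /dsum /=; congr GMap; prep; repeat progress step; try reflexivity.
Section S.
Variables (d : dagAddCat) (X A B C : Ob d).

Lemma step1 (f : Hom A B) (g : Hom A C) (P : Hom (bp B C) (bp B C)) (s : Hom X B) (t : Hom X C) :
  gcomp (gtensor (GMap (C2 f g) P (C2 s t)) (gid A)) (gcopy A)
  = GMap (C2 (C2 f g) (idm A)) (C2 (R2 P 0) 0) (C2 (C2 s t) 0).
Proof. by solve. Qed.

Lemma step2 (f : Hom A B) (g : Hom A C) (a : Hom B B) (b : Hom C B) (c : Hom B C) (e : Hom C C) (s : Hom X B) (t : Hom X C) :
  gcomp (gtensor (gtensor (gid B) (gdel C)) (gid A))
    (GMap (C2 (C2 f g) (idm A)) (C2 (R2 (C2 (R2 a b) (R2 c e)) 0) 0) (C2 (C2 s t) 0))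
  = GMap (C2 (C2 f 0) (idm A)) (C2 (C2 (R2 (R2 a 0) 0) 0) 0) (C2 (C2 s 0) 0) :> gmap X A (bp (bp B zob) A).
Proof. by solve. Qed.

Lemma step3 (f : Hom A B) (a : Hom B B) (s : Hom X B) :
  gcomp (gtensor (grunit B) (gid A))
    (GMap (C2 (C2 f 0) (idm A)) (C2 (C2 (R2 (R2 a 0) 0) 0) 0) (C2 (C2 s 0) 0))
  = GMap (C2 f (idm A)) (C2 (R2 a 0) 0) (C2 s 0) :> gmap X A (bp B A).
Proof. by solve. Qed.

Lemma step4 (f : Hom A B) (a : Hom B B) (s : Hom X B) :
  gcomp (gtensor (gcopy B) (gid A)) (GMap (C2 f (idm A)) (C2 (R2 a 0) 0) (C2 s 0))
  = GMap (C2 (C2 f f) (idm A)) (C2 (C2 (R2 (R2 a a) 0) (R2 (R2 a a) 0)) 0) (C2 (C2 s s) 0) :> gmap X A (bp (bp B B) A).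
Proof. by solve. Qed.

Lemma step5 (f : Hom A B) (a : Hom B B) (s : Hom X B) :
  gcomp (gassoc B B A) (GMap (C2 (C2 f f) (idm A)) (C2 (C2 (R2 (R2 a a) 0) (R2 (R2 a a) 0)) 0) (C2 (C2 s s) 0))
  = GMap (C2 f (C2 f (idm A))) (C2 (R2 a (R2 a 0)) (C2 (R2 a (R2 a 0)) 0)) (C2 s (C2 s 0)) :> gmap X A (bp B (bp B A)).
Proof. by solve. Qed.

Lemma step6 (f : Hom A B) (a : Hom B B) (s : Hom X B) (m : Hom B C) (k : Hom A C) (eta : Hom C C) (u : Hom X C) :
  gcomp (gtensor (gid B) (GMap (R2 m k) eta u))
    (GMap (C2 f (C2 f (idm A))) (C2 (R2 a (R2 a 0)) (C2 (R2 a (R2 a 0)) 0)) (C2 s (C2 s 0)))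
  = GMap (C2 f (m \oc f + k)) (C2 (R2 a (a \oc dag m)) (R2 (m \oc a) (eta + m \oc a \oc dag m))) (C2 s (u + m \oc s)).
Proof. by solve. Qed.
End S.

Section M.
Variables (d : dagAddCat) (X A B C : Ob d).
Lemma condE (f : Hom A B) (g : Hom A C) (a : Hom B B) (b : Hom C B) (c : Hom B C) (e : Hom C C)
  (s : Hom X B) (t : Hom X C) (m : Hom B C) (k : Hom A C) (eta : Hom C C) (u : Hom X C) :
  conditional (GMap (R2 m k) eta u) (GMap (C2 f g) (C2 (R2 a b) (R2 c e)) (C2 s t)) <->
  [/\ m \oc f + k = g, a \oc dag m = b, m \oc a = c, eta + m \oc a \oc dag m = e & u + m \oc s = t].
Proof.
rewrite /conditional step1 step2 step3 step4 step5 step6; split.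
  by case=> /C2_inj [_ E1] /C2_inj [/R2_inj [_ E2] /R2_inj [E3 E4]] /C2_inj [_ E5].
by case=> -> -> -> -> ->.
Qed.
End M.

Unset Implicit Arguments.

Theorem mainTheorem8 (d : dagAddCat) (X A B C : Ob d)
  (f : Hom A B) (g : Hom A C) (alpha : Hom B B) (beta : Hom C B) (delta : Hom C C)
  (s : Hom X B) (t : Hom X C) :
  let Sigma := mat2 alpha beta (dag beta) delta in
  let F : gmap X A (bp B C) := GMap (col2 f g) Sigma (col2 s t) in
  let Gm (m : Hom B C) : gmap X (bp B A) C :=
    GMap (row2 m (g - m \oc f)) (delta - m \oc beta) (t - m \oc s) in
  dpositive Sigma ->
  (* (i) *)
  (forall G : gmap X (bp B A) C, is_gmap G -> conditional G F ->
     cond_gen alpha beta delta (gf G \oc in1 B A)) /\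
  (* (ii) *)
  (forall m : Hom B C, cond_gen alpha beta delta m ->
     is_gmap (Gm m) /\ conditional (Gm m) F) /\
  (* the constructions are mutually inverse *)
  (forall m : Hom B C, cond_gen alpha beta delta m -> gf (Gm m) \oc in1 B A = m) /\
  (forall G : gmap X (bp B A) C, is_gmap G -> conditional G F ->
     G = Gm (gf G \oc in1 B A)).
Proof.
move=> Sigma F Gm HS.
have SigE : Sigma = C2 (R2 alpha beta) (R2 (dag beta) delta).
  by rewrite /Sigma mat2E !C2E !R2E.
have FE : F = GMap (C2 f g) (C2 (R2 alpha beta) (R2 (dag beta) delta)) (C2 s t).
  by rewrite /F SigE !C2E.
have aS : dag alpha = alpha.
  case: HS => Y [phi Hphi].
  have : dag Sigma = Sigma by rewrite Hphi dC dK.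
  rewrite SigE dC2 !dR2 dK R2C.
  by case/C2_inj => /R2_inj [-> _] _.
have GE : forall G : gmap X (bp B A) C, exists m k eta u, G = GMap (R2 m k) eta u.
  move=> [gG eta u]; exists (gG \oc in1 B A), (gG \oc in2 B A), eta, u.
  by rewrite -R2E -row2E.
split; [|split; [|split]].
- move=> G; have [m [k [eta [u ->]]]] := GE G.
  rewrite /is_gmap /= => Hpos; rewrite FE => /condE [E1 E2 E3 E4 E5].
  rewrite R2U r_in1; split => //.
  by rewrite -E4 -E2 cA addrK.
- move=> m [Hm Hp]; split => //.
  rewrite /Gm FE R2E; apply/condE.
  have Eb : alpha \oc dag m = beta.
    by rewrite -aS -dC Hm dK.
  split => //.
  + by rewrite addrC subrK.
  + by rewrite -Eb cA subrK.
  + by rewrite subrK.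
- by move=> m _; rewrite /= r_in1.
- move=> G; have [m [k [eta [u ->]]]] := GE G.
  rewrite /is_gmap /= => Hpos; rewrite FE => /condE [E1 E2 E3 E4 E5].
  rewrite /Gm /= R2U r_in1 -E1 -E4 -E2 -E5 cA (addrC (m \oc f)) !addrK.
  by [].
Qed.
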